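(* Let $f:(\mathbb C^2,0)\to(\mathbb C,0)$ be an irreducible plane curve germ which is singular at $0$, let $p,q$ be coprime positive integers, and let $G(M)$ be the plumbing graph of $M=S^3_{-p/q}(K_f)$ described in the context. Then $G(M)$ is an almost rational (AR) graph.
   Context: $K_f=\{f=0\}\cap S^3_\epsilon\subset S^3$ is the (algebraic) knot of $f$; it is not the unknot. Let $G(f)$ be the minimal embedded good resolution graph of $f$ (a tree of rational curves decorated by self-intersection numbers); it has a unique vertex $v_0$ with decoration $-1$, and the strict transform of $\{f=0\}$ meets the exceptional curve $E_{v_0}$. Let $\bar G$ be this graph with the arrow (strict transform) removed, and let $m_f$ be the vanishing order of the pull-back of $f$ along $E_{v_0}$. Write $p/q=[k_1,\dots,k_s]=k_1-1/(k_2-1/(\cdots-1/k_s))$ with integers $k_1\ge 1$ and $k_j\ge2$ for $j\ge 2$. The graph $G(M)$ is obtained from $\bar G$ by attaching a chain of vertices $v_1,\dots,v_s$ (with $v_1$ joined to $v_0$ and $v_j$ joined to $v_{j+1}$), where $v_1$ has Euler number $-k_1-m_f$ and $v_j$ has Euler number $-k_j$ for $2\le j\le s$; it is a negative definite plumbing graph (all vertices genus $0$ spheres) whose plumbed 3-manifold is $M$. For a connected negative definite plumbing tree with lattice $L$ (basis the vertices, intersection form given by Euler numbers on the diagonal and $1$ for adjacent vertices) and canonical class $K$ (defined by $(K,b_v)=-e_v-2$ for every vertex $v$), the graph is called rational if $-(l,l+K)/2\ge 1$ for every nonzero $l\ge0$ in $L$ (Artin's criterion). A graph is called almost rational (AR)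 if it has a vertex $v$ such that replacing the Euler number $e_v$ by any smaller integer yields a rational graph. *)

(* Defs.v *)
From mathcomp Require Import all_boot all_order all_algebra.
Set Implicit Arguments. Unset Strict Implicit. Unset Printing Implicit Defensive.
Import Order.TTheory GRing.Theory Num.Theory.
Local Open Scope ring_scope.

(* Combinatorial model of the minimal embedded good resolution of an       *)
(* irreducible singular plane curve germ, built from its Newton pairs      *)
(* (p_i, q_i) by simulating the sequence of point blow-ups.                *)
(* Vertices are 0 .. n-1 (in order of creation); pg_e = self-intersections *)
(* (Euler numbers), pg_m = vanishing orders of the pull-back of f along    *)
(* the exceptional curves, pg_edges = intersecting pairs of exceptional    *)
(* curves.                                                                 *)
Record pgraph := PGraph {
  pg_n : nat; pg_e : seq int; pg_m : seq nat; pg_edges : seq (nat * nat) }.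

(* Blow up the point A ∩ B (A, B = the at most two exceptional curves      *)
(* through the centre); mc = multiplicity of the strict transform of f     *)
(* at the centre.                                                          *)
Definition blowup (G : pgraph) (A B : option nat) (mc : nat) : pgraph :=
  let E := pg_n G in
  let decr (X : option nat) (e : seq int) :=
    if X is Some x then set_nth 0 e x (nth 0 e x - 1) else e in
  let mult (X : option nat) := if X is Some x then nth 0%N (pg_m G) x else 0%N in
  let edges0 :=
    if (A, B) is (Some x, Some y) then
      filter (fun uv => ~~ ((uv == (x, y)) || (uv == (y, x)))) (pg_edges G)
    else pg_edges G in
  let newedges (X : option nat) := if X is Some x then [:: (x, E)] else [::] in
  PGraph E.+1 (rcons (decr B (decr A (pg_e G))) (-1))
         (rcons (pg_m G) (mult A + mult B + mc)%N)
         (edges0 ++ newedges A ++ newedges B).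

(* Local situation: strict transform  w^a = u^b (+ h.o.t.), A = {u = 0},   *)
(* B = {w = 0} (None = not an exceptional curve); P = product of the later *)
(* p_j, so that the strict transform of f has multiplicity min(a,b) * P.  *)
(* Returns the new graph and the vertex (node) met by the strict transform.*)
Fixpoint pair_steps (fuel : nat) (G : pgraph) (A B : option nat)
    (a b P : nat) : pgraph * nat :=
  if fuel is fuel'.+1 then
    let G' := blowup G A B (minn a b * P)%N in
    let E := pg_n G in
    if (a == 1%N) && (b == 1%N) then (G', E)
    else if (a < b)%N then pair_steps fuel' G' (Some E) B a (b - a) P
    else pair_steps fuel' G' A (Some E) (a - b) b P
  else (G, 0%N).

Fixpoint res_aux (G : pgraph) (A : option nat) (ps : seq (nat * nat))
    : pgraph * nat :=
  match ps with
  | [::] => (G, odflt 0%N A)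
  | pq :: ps' =>
      let r := pair_steps (pq.1 + pq.2) G A None pq.1 pq.2
                          (\prod_(x <- ps') x.1)%N in
      res_aux r.1 (Some r.2) ps'
  end.

(* (graph G(f) without the arrow, vertex v_0 carrying the arrow). *)
Definition min_good_res (ps : seq (nat * nat)) : pgraph * nat :=
  res_aux (PGraph 0 [::] [::] [::]) None ps.

Definition newton_pairs (ps : seq (nat * nat)) : bool :=
  [&& ps != [::],
      all (fun pq => (2 <= pq.1)%N && (0 < pq.2)%N && coprime pq.1 pq.2) ps
    & (2 <= (head (0, 0) ps).2)%N]%N.

(* Plumbing graphs (all vertices genus 0), lattice, Artin criterion, AR.   *)
Record plumbing := Plumbing {
  pl_n : nat; pl_e : seq int; pl_edges : seq (nat * nat) }.

(* Lattice elements l = sum_v l v * b_v, v < pl_n G. *)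
Definition iform (G : plumbing) (l1 l2 : nat -> int) : int :=
  \sum_(v < pl_n G) (pl_e G)`_v * l1 v * l2 v
  + \sum_(uv <- pl_edges G) (l1 uv.1 * l2 uv.2 + l1 uv.2 * l2 uv.1).

(* (l, K) where (K, b_v) = - e_v - 2. *)
Definition Kform (G : plumbing) (l : nat -> int) : int :=
  \sum_(v < pl_n G) l v * (- (pl_e G)`_v - 2).

Definition rational_graph (G : plumbing) : Prop :=
  forall l : nat -> int,
    (forall v, (v < pl_n G)%N -> 0 <= l v) ->
    (exists v, (v < pl_n G)%N /\ l v != 0) ->
    1 <= - ((iform G l l + Kform G l)%:~R / 2 : rat).

Definition set_euler (G : plumbing) (v : nat) (x : int) : plumbing :=
  Plumbing (pl_n G) (set_nth 0 (pl_e G) v x) (pl_edges G).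

Definition almost_rational (G : plumbing) : Prop :=
  exists v, (v < pl_n G)%N /\
    forall x : int, x < (pl_e G)`_v -> rational_graph (set_euler G v x).

(* Negative continued fraction [k_1, ..., k_s] = k_1 - 1/(k_2 - ...). *)
Fixpoint hjval (ks : seq nat) : rat :=
  match ks with
  | [::] => 0
  | [:: k] => k%:R
  | k :: ks' => k%:R - (hjval ks')^-1
  end.

(* G(M): G(f) minus the arrow, plus the chain v_1 .. v_s attached to v_0;  *)
(* v_j has index N + j - 1 where N = number of vertices of G(f).           *)
Definition surgery_graph (ps : seq (nat * nat)) (ks : seq nat) : plumbing :=
  let r := min_good_res ps in
  let Gr := r.1 in let v0 := r.2 in
  let N := pg_n Gr in
  let mf := nth 0%N (pg_m Gr) v0 in
  Plumbing (N + size ks)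
    (pg_e Gr ++ [seq (if j == 0%N then - (nth 0%N ks j)%:Z - mf%:Z
                      else - (nth 0%N ks j)%:Z) | j <- iota 0 (size ks)])
    (pg_edges Gr ++ (v0, N) :: [seq (N + j, N + j.+1)%N | j <- iota 0 (size ks).-1]).

(* Main.v *)
Require Import Defs.
From mathcomp Require Import all_boot all_order all_algebra.
From mathcomp Require Import zify ring lra.
Import Order.TTheory GRing.Theory Num.Theory.
Local Open Scope ring_scope.

Definition Fv (l : nat -> int) (y : int) (v : nat) : int := y * l v * l v + l v * (- y - 2).
Definition Ee (l : nat -> int) (s : seq (nat * nat)) : int :=
  \sum_(uv <- s) (l uv.1 * l uv.2 + l uv.2 * l uv.1).

Lemma QE (G : plumbing) l :
  iform G l l + Kform G l = \sum_(v < pl_n G) Fv l (pl_e G)`_v v + Ee l (pl_edges G).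
Proof. by rewrite /iform /Kform addrAC -big_split. Qed.

Definition QG (G : pgraph) l := \sum_(v < pg_n G) Fv l (pg_e G)`_v v + Ee l (pg_edges G).

Lemma sum_set_nth (n i : nat) (e : seq int) (y : int) (F : int -> nat -> int) :
  (i < n)%N -> \sum_(v < n) F (set_nth 0 e i y)`_v v
    = \sum_(v < n) F e`_v v + (F y i - F e`_i i).
Proof.
move=> Hi; rewrite (bigD1 (Ordinal Hi)) //= [in RHS](bigD1 (Ordinal Hi)) //= nth_set_nth /= eqxx.
rewrite (eq_bigr (fun v : 'I_n => F e`_v v)); last first.
  move=> v Hv; rewrite nth_set_nth /=.
  have -> : (nat_of_ord v == i) = false; last by [].
  apply/negbTE; apply: contra Hv => /eqP Hv; apply/eqP; exact: val_inj.
set S := \sum_(_ < _ | _) _. set a := F y i. set b := F e`_i i. ring.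
Qed.

Definition oval (l : nat -> int) (X : option nat) : int := if X is Some x then l x else 0.
Definition validopt n (X : option nat) := if X is Some x then (x < n)%N else true.
Definition decr' (X : option nat) (e : seq int) :=
  if X is Some x then set_nth 0 e x (nth 0 e x - 1) else e.
Definition mult' (G : pgraph) (X : option nat) := if X is Some x then nth 0%N (pg_m G) x else 0%N.
Definition edges0' (G : pgraph) (A B : option nat) :=
  if (A, B) is (Some x, Some y) then
      filter (fun uv => ~~ ((uv == (x, y)) || (uv == (y, x)))) (pg_edges G)
    else pg_edges G.
Definition newedges' (E : nat) (X : option nat) := if X is Some x then [:: (x, E)] else [::].

Lemma blowupE G A B mc : blowup G A B mc =
  PGraph (pg_n G).+1 (rcons (decr' B (decr' A (pg_e G))) (-1))
         (rcons (pg_m G) (mult' G A + mult' G B + mc)%N)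
         (edges0' G A B ++ newedges' (pg_n G) A ++ newedges' (pg_n G) B).
Proof. by []. Qed.

Lemma decr_sum n X e l : validopt n X ->
  \sum_(v < n) Fv l (decr' X e)`_v v = \sum_(v < n) Fv l e`_v v - (oval l X * oval l X - oval l X).
Proof.
case: X => [x|] /= Hx; last by rewrite mulr0 subr0.
rewrite sum_set_nth // /Fv; congr (_ + _); ring.
Qed.

Lemma size_decr X e : validopt (size e) X -> size (decr' X e) = size e.
Proof. by case: X => [x|] //= Hx; rewrite size_set_nth; apply/maxn_idPr. Qed.

Lemma Ee_cat l s1 s2 : Ee l (s1 ++ s2) = Ee l s1 + Ee l s2.
Proof. by rewrite /Ee big_cat. Qed.

Lemma Ee_new l E X : Ee l (newedges' E X) = 2 * oval l X * l E.
Proof. case: X => [x|] /=; rewrite /Ee ?big_cons big_nil /=; ring. Qed.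

Lemma Ee_filter l x y s : 0 <= l x * l y ->
  Ee l (filter (fun uv => ~~ ((uv == (x, y)) || (uv == (y, x)))) s) <= Ee l s.
Proof.
move=> H; elim: s => [|uv s IH] //=; rewrite /Ee big_cons.
case: ifP => Hm; first by rewrite big_cons lerD2l.
move/negbFE: Hm => /orP [] /eqP -> /=; rewrite -/(Ee l _);
  apply: (le_trans IH); rewrite lerDr; lia.
Qed.

Lemma Ee_removed l x y s : 0 <= l x * l y ->
  has (fun uv => (uv == (x, y)) || (uv == (y, x))) s ->
  Ee l (filter (fun uv => ~~ ((uv == (x, y)) || (uv == (y, x)))) s) <= Ee l s - 2 * (l x * l y).
Proof.
move=> H; elim: s => [|uv s IH] //= Hh; rewrite /Ee big_cons.
case Hm: ((uv == (x, y)) || (uv == (y, x))) Hh => /= Hh.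
  have := Ee_filter l x y s H; rewrite /Ee => Hf.
  have E1 : forall S : int, l x * l y + l y * l x + S - 2 * (l x * l y) = S by move=> S; ring.
  have E2 : forall S : int, l y * l x + l x * l y + S - 2 * (l x * l y) = S by move=> S; ring.
  by move/orP: Hm => [] /eqP -> /=; rewrite ?E1 ?E2.
rewrite big_cons -/(Ee l _) -/(Ee l _); have key : forall (a E S c : int), E <= S - c -> a + E <= a + S - c by move=> *; lia.
apply: key; exact: IH.
Qed.

Definition EP (G : pgraph) (A B : option nat) :=
  match A, B with
  | Some x, Some y => has (fun uv => (uv == (x, y)) || (uv == (y, x))) (pg_edges G)
  | _, _ => true
  end.

Record inv (G : pgraph) : Prop := Inv {
  inv_se : size (pg_e G) = pg_n G;
  inv_sm : size (pg_m G) = pg_n G;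
  inv_edges : all (fun uv => (uv.1 < pg_n G) && (uv.2 < pg_n G))%N (pg_edges G);
  inv_m : forall v, (v < pg_n G)%N -> (0 < nth 0%N (pg_m G) v)%N;
  inv_rat : forall l, (forall v, (v < pg_n G)%N -> 0 <= l v) ->
     (exists v, (v < pg_n G)%N /\ l v != 0) -> QG G l <= -2 }.

Lemma QG_zero G l : all (fun uv => (uv.1 < pg_n G) && (uv.2 < pg_n G))%N (pg_edges G) ->
  (forall v, (v < pg_n G)%N -> l v = 0) -> QG G l = 0.
Proof.
move=> He Hl; rewrite /QG big1 ?add0r; last by move=> v _; rewrite /Fv Hl // mulr0 mul0r.
rewrite /Ee big1_seq // => uv /andP [_ Huv].
by move/allP: He => /(_ _ Huv) /andP [H1 H2]; rewrite Hl // Hl // mulr0 mul0r addr0.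
Qed.

Lemma Ee_edges0 G A B l : EP G A B -> 0 <= oval l A * oval l B ->
  Ee l (edges0' G A B) <= Ee l (pg_edges G) - 2 * (oval l A * oval l B).
Proof.
case: A => [x|]; case: B => [y|] //= H Hp; rewrite ?mulr0 ?mul0r ?subr0 //.
exact: Ee_removed.
Qed.

Lemma nonneg_tt (t : int) : 0 <= t * (t + 1).
Proof. have [H|H] := lerP 0 t; nia. Qed.

Lemma QG_blowup G A B mc l : inv G -> validopt (pg_n G) A -> validopt (pg_n G) B -> EP G A B ->
  (forall v, (v <= pg_n G)%N -> 0 <= l v) ->
  QG (blowup G A B mc) l <=
    QG G l - (l (pg_n G) - oval l A - oval l B) * (l (pg_n G) - oval l A - oval l B + 1).
Proof.
move=> [Hse Hsm Hed Hm Hr] HA HB HEP Hl.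
have HAn : 0 <= oval l A by case: A HA {HEP} => [x|] //= Hx; apply: Hl; exact: ltnW.
have HBn : 0 <= oval l B by case: B HB {HEP} => [x|] //= Hx; apply: Hl; exact: ltnW.
rewrite blowupE /QG /= big_ord_recr /=.
have HsD : size (decr' B (decr' A (pg_e G))) = pg_n G.
  by rewrite !size_decr ?size_decr ?Hse.
rewrite nth_rcons HsD ltnn eqxx.
rewrite (eq_bigr (fun v : 'I_(pg_n G) => Fv l (decr' B (decr' A (pg_e G)))`_v v)); last first.
  by move=> v _; rewrite nth_rcons HsD ltn_ord.
rewrite decr_sum // decr_sum // !Ee_cat !Ee_new.
have := Ee_edges0 G A B l HEP (mulr_ge0 HAn HBn).
set S := \sum_(i < pg_n G) _. set E0 := Ee l (edges0' G A B). set E := Ee l (pg_edges G).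
rewrite /Fv; set a := oval l A; set b := oval l B; set c := l (pg_n G).
move=> HE; nia.
Qed.

Lemma validopt_S n X : validopt n X -> validopt n.+1 X.
Proof. by case: X => //= x Hx; exact: ltnW. Qed.

Lemma oval_zero n X (l : nat -> int) : validopt n X -> (forall v, (v < n)%N -> l v = 0) -> oval l X = 0.
Proof. by case: X => [x|] //= Hx H; rewrite H. Qed.

Lemma inv_blowup G A B mc : inv G -> validopt (pg_n G) A -> validopt (pg_n G) B -> EP G A B ->
  (A != None) || (B != None) || (0 < mc)%N -> inv (blowup G A B mc).
Proof.
move=> HI HA HB HEP Hmc; have [Hse Hsm Hed Hm Hr] := HI.
constructor.
- by rewrite blowupE /= size_rcons !size_decr ?size_decr ?Hse.
- by rewrite blowupE /= size_rcons Hsm.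
- rewrite blowupE /= !all_cat; apply/and3P; split.
  + have Hsub : all (fun uv => (uv.1 < pg_n G) && (uv.2 < pg_n G))%N (edges0' G A B).
      case: A {HA HEP Hmc} => [x|]; case: B {HB} => [y|] //=.
      by apply/allP => uv; rewrite mem_filter => /andP [_ H]; exact: (allP Hed).
    apply: sub_all Hsub => uv /andP [H1 H2]; rewrite !ltnS ltnW // ltnW //.
  + by case: A HA {HEP Hmc} => [x|] //= Hx; rewrite ltnS ltnW //= ltnSn.
  + by case: B HB {HEP Hmc} => [x|] //= Hx; rewrite ltnS ltnW //= ltnSn.
- move=> v; rewrite blowupE /= nth_rcons Hsm ltnS leq_eqVlt => /orP [/eqP ->|Hv].
    rewrite ltnn eqxx; move: Hmc; clear HEP.
    case: A HA => [x|] /= Hx; first by move=> _; rewrite -addnA addn_gt0 Hm.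
    case: B HB => [y|] /= Hy; first by move=> _; rewrite addn_gt0 Hm ?orbT.
    by [].
  by rewrite Hv; apply: Hm.
- move=> l Hl [w [Hw Hlw]].
  have Hl' : forall v, (v <= pg_n G)%N -> 0 <= l v by move=> v Hv; apply: Hl; rewrite blowupE.
  have Hb := QG_blowup G A B mc l HI HA HB HEP Hl'.
  set t := (l (pg_n G) - oval l A - oval l B) in Hb.
  have Ht := nonneg_tt t.
  case: (boolP [exists v : 'I_(pg_n G), l v != 0]) => [/existsP [v Hv]|Hno].
    have := Hr l (fun v Hv => Hl v (ltnW Hv)) (ex_intro _ (nat_of_ord v) (conj (ltn_ord v) Hv)).
    move=> H; apply: (le_trans Hb); lia.
  have H0 : forall v, (v < pg_n G)%N -> l v = 0.
    move=> v Hv; apply/eqP; apply: contraNT Hno => Hne; apply/existsP.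
    by exists (Ordinal Hv).
  have Hz := QG_zero G l Hed H0.
  have HA0 : oval l A = 0 by exact: oval_zero HA H0.
  have HB0 : oval l B = 0 by exact: oval_zero HB H0.
  move: Hw; rewrite blowupE /= ltnS leq_eqVlt => /orP [/eqP Ew|Hw]; last first.
    by move: Hlw; rewrite H0.
  subst w.
  have Hc : 0 <= l (pg_n G) by apply: Hl'.
  move: Hb; rewrite /t HA0 HB0 Hz subr0 subr0 sub0r => Hb.
  apply: (le_trans Hb); move: Hlw Hc; set c := l (pg_n G) => Hlw Hc.
  have : 1 <= c by lia.
  nia.
Qed.

Lemma EP_newB G A B mc : EP (blowup G A B mc) (Some (pg_n G)) B.
Proof. by case: B => [y|] //=; rewrite !has_cat /= eqxx !orbT. Qed.
Lemma EP_newA G A B mc : EP (blowup G A B mc) A (Some (pg_n G)).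
Proof. by case: A => [x|] //=; rewrite !has_cat /= eqxx !orbT. Qed.

Lemma pair_steps_inv fuel : forall G A B a b P, inv G ->
  validopt (pg_n G) A -> validopt (pg_n G) B -> EP G A B ->
  (A != None) || (B != None) || (0 < minn a b * P)%N ->
  (0 < fuel)%N || (0 < pg_n G)%N ->
  inv (pair_steps fuel G A B a b P).1 /\
  ((pair_steps fuel G A B a b P).2 < pg_n (pair_steps fuel G A B a b P).1)%N.
Proof.
elim: fuel => [|f IH] G A B a b P HI HA HB HEP Hc Hf /=; first by split.
have HI' := inv_blowup G A B (minn a b * P)%N HI HA HB HEP Hc.
have Hn : pg_n (blowup G A B (minn a b * P)%N) = (pg_n G).+1 by rewrite blowupE.
case: ifP => _; first by rewrite Hn ltnSn.
case: ifP => _; apply: IH => //; rewrite ?Hn //=;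
  first [exact: (validopt_S _ _ HB) | exact: (validopt_S _ _ HA) | exact: (EP_newB G A B _)
        | exact: (EP_newA G A B _) | by rewrite orbT].
Qed.

Lemma res_aux_inv ps : forall G A, inv G -> validopt (pg_n G) A ->
  all (fun pq => (0 < pq.1) && (0 < pq.2))%N ps -> (A != None) || (ps != [::]) ->
  inv (res_aux G A ps).1 /\ ((res_aux G A ps).2 < pg_n (res_aux G A ps).1)%N.
Proof.
elim: ps => [|pq ps IH] G A HI HA Hall HAp /=.
  by case: A HA HAp => [x|] //= Hx; split.
move/andP: Hall => [/andP [Hp Hq] Hall].
have HP : (0 < \prod_(x <- ps) x.1)%N.
  rewrite big_seq; apply: prodn_cond_gt0 => x Hx.
  by move/allP: Hall => /(_ _ Hx) /andP [].
have [H1 H2] := pair_steps_inv (pq.1 + pq.2) G A None pq.1 pq.2 (\prod_(x <- ps) x.1)%N HI HA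
  is_true_true (ltac:(by case: A {HA HAp})) (ltac:(by rewrite !muln_gt0 leq_min Hp Hq HP !orbT))
  (ltac:(by rewrite addn_gt0 Hp)).
by apply: IH.
Qed.

Lemma mgr_inv ps : newton_pairs ps ->
  inv (min_good_res ps).1 /\ ((min_good_res ps).2 < pg_n (min_good_res ps).1)%N.
Proof.
move=> /and3P [Hne Hall _]; apply: res_aux_inv => //.
- constructor => //= l _ [v [Hv _]] //.
- apply: sub_all Hall => pq /andP [/andP [H1 H2] _]; rewrite H2 andbT; exact: ltnW.
Qed.

Definition Wf (s : nat) (b : int) (c : nat -> int) : int :=
  -(b*b) + 2*b*c 0%N - 2 * \sum_(j < s.+1) c j * c j + 2 * \sum_(j < s) c j * c j.+1.

Lemma W_bound s : forall (b : int) (c : nat -> int), 0 <= b -> (forall j, (j <= s)%N -> 0 <= c j) ->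
  Wf s b c <= -b /\ (b = 0 -> (exists j, (j <= s)%N /\ c j != 0) -> Wf s b c <= -2).
Proof.
elim: s => [|s IH] b c Hb Hc.
  rewrite /Wf big_ord1 big_ord0 /=.
  have H0 := Hc 0%N (leqnn _).
  have T1 := nonneg_tt (b - c 0%N - 1). have T2 := nonneg_tt (c 0%N - 1).
  split; first nia.
  move=> Eb [j [Hj Hj0]]; move: Hj; rewrite leqn0 => /eqP Ej; subst j.
  have : 1 <= c 0%N by lia.
  nia.
have H0 := Hc 0%N (leq0n _).
have [IH1 IH2] := IH (c 0%N) (fun j => c j.+1) H0 (fun j Hj => Hc j.+1 Hj).
have EW : Wf s.+1 b c = -(b*b) + 2*b*c 0%N - c 0%N * c 0%N + Wf s (c 0%N) (fun j => c j.+1).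
  have E1 : \sum_(j < s.+2) c j * c j = c 0%N * c 0%N + \sum_(j < s.+1) c j.+1 * c j.+1.
    by rewrite big_ord_recl.
  have E2 : \sum_(j < s.+1) c j * c j.+1 = c 0%N * c 1%N + \sum_(j < s) c j.+1 * c j.+2.
    by rewrite big_ord_recl.
  rewrite /Wf E1 E2.
  set S1 := \sum_(j < s.+1) _. set S2 := \sum_(j < s) _.
  ring.
rewrite EW.
have T1 := nonneg_tt (b - c 0%N - 1).
split; first nia.
move=> Eb [j [Hj Hj0]].
case: (boolP (c 0%N == 0)) => Hc0.
  move/eqP: Hc0 => Hc0.
  case: j Hj Hj0 => [|j] Hj Hj0; first by rewrite Hc0 eqxx in Hj0.
  have := IH2 Hc0 (ex_intro _ j (conj Hj Hj0)).
  rewrite Hc0 Eb; lia.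
have : 1 <= c 0%N by lia.
rewrite Eb; nia.
Qed.

Lemma set_nth_cat (T : Type) (x0 : T) s1 s2 i y : (i < size s1)%N ->
  set_nth x0 (s1 ++ s2) i y = set_nth x0 s1 i y ++ s2.
Proof. by elim: s1 i => [|a s1 IH] [|i] //= Hi; rewrite IH. Qed.

Lemma FvD (l : nat -> int) (x e : int) (v : nat) : x < e ->
  Fv l x v - Fv l e v <= -(l v * l v - l v).
Proof. rewrite /Fv => H; have := nonneg_tt (l v - 1); nia. Qed.

Lemma rat_key (X : int) : X <= -2 -> 1 <= - ((X%:~R : rat) / 2).
Proof.
move=> H; have : (X%:~R : rat) <= ((-2 : int)%:~R) by rewrite ler_int.
rewrite intrN (_ : ((2:int)%:~R : rat) = 2) // => H'; lra.
Qed.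

Theorem lemma2p4p2 (ps : seq (nat * nat)) (p q : nat) (ks : seq nat) :
  newton_pairs ps ->
  (0 < p)%N -> (0 < q)%N -> coprime p q ->
  ks != [::] -> (1 <= head 0%N ks)%N -> all (fun k => 2 <= k)%N (behead ks) ->
  hjval ks = (p%:R / q%:R : rat) ->
  almost_rational (surgery_graph ps ks).
Proof.
move=> Hnp _ _ _ Hks Hk1 Hks2 _.
case: ks Hks Hk1 Hks2 => [//|k ks] _ /= Hk1 Hks2.
have [HI Hv0] := mgr_inv ps Hnp.
rewrite /almost_rational /surgery_graph /=.
move: HI Hv0; case: (min_good_res ps) => Gr v0 /= HI Hv0.
have [Hse Hsm Hed Hm Hr] := HI.
have Hmf : (0 < nth 0%N (pg_m Gr) v0)%N := Hm v0 Hv0.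
exists v0; split; first by rewrite ltn_addr.
move=> x Hx l Hl Hnz.
apply: rat_key.

rewrite QE /set_euler /=.
set S := (X in pg_e Gr ++ X).
have HS : forall j, (j < (size ks).+1)%N -> S`_j <= -2.
  case=> [|j] Hj /=.
    have H2 : (2 <= k + nth 0%N (pg_m Gr) v0)%N by rewrite -add1n leq_add.
    by rewrite -opprD lerN2 -PoszD lez_nat.
  rewrite (nth_map 0%N) ?size_iota // nth_iota // add1n /=.
  have H2 : (2 <= nth 0%N ks j)%N by apply: (allP Hks2); apply: mem_nth.
  by rewrite lerN2 lez_nat.
have Hv0' : (v0 < size (pg_e Gr))%N by rewrite Hse.
rewrite set_nth_cat //= big_split_ord /=.
rewrite (eq_bigr (fun i : 'I_(pg_n Gr) => Fv l (set_nth 0 (pg_e Gr) v0 x)`_i i)); last first.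
  by move=> i _; rewrite /= nth_cat size_set_nth (maxn_idPr Hv0') Hse ltn_ord.
rewrite (eq_bigr (fun j : 'I_(size ks).+1 => Fv l S`_j (pg_n Gr + j))); last first.
  by move=> j _; rewrite /= nth_cat size_set_nth (maxn_idPr Hv0') Hse ltnNge leq_addr /= addKn.
rewrite sum_set_nth // Ee_cat /Ee big_cons big_map /=.
rewrite (_ : iota 0 (size ks) = index_iota 0 (size ks)) ?big_mkord; last by rewrite /index_iota subn0.
have Hl' : forall v, (v < pg_n Gr + (size ks).+1)%N -> 0 <= l v := Hl.
have Hnz' : exists v, (v < pg_n Gr + (size ks).+1)%N /\ l v != 0 := Hnz.
move: Hx; rewrite /= nth_cat Hse Hv0 => Hx.
set N := pg_n Gr in Hl' Hnz' Hv0 Hx *.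
set s := size ks in Hl' Hnz' HS *.
set b := l v0.
have Hb : 0 <= b by apply: Hl'; rewrite ltn_addr.
pose c := fun j => l (N + j)%N.
have Hc : forall j, (j <= s)%N -> 0 <= c j by move=> j Hj; apply: Hl'; rewrite ltn_add2l ltnS.
have HV : \sum_(i < s.+1) Fv l S`_i (N + i) <= -2 * \sum_(i < s.+1) c i * c i.
  rewrite mulr_sumr; apply: ler_sum => i _.
  have := HS i (ltn_ord i); have := Hc i (ltn_ord i); rewrite /Fv /c.
  set y := S`_i; set z := l (N + i)%N => Hz Hy.
  have := nonneg_tt (z - 1); nia.
have HB : Fv l x v0 - Fv l (pg_e Gr)`_v0 v0 <= -(b*b - b).
  exact: FvD.
have EE : \sum_(i < s) (l (N + i)%N * l (N + i.+1)%N + l (N + i.+1)%N * l (N + i)%N)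
    = 2 * \sum_(i < s) c i * c i.+1.
  by rewrite mulr_sumr; apply: eq_bigr => i _; rewrite /c; ring.
have EW : Wf s b c = -(b*b) + 2 * b * (l N) - 2 * \sum_(i < s.+1) c i * c i + 2 * \sum_(i < s) c i * c i.+1.
  by rewrite /Wf /c addn0.
have [HW1 HW2] := W_bound s b c Hb Hc.
rewrite EE; rewrite EW in HW1 HW2.
move: HV HB HW1 HW2.
set V := \sum_(i < s.+1) Fv l S`_i (N + i).
set C2 := \sum_(i < s.+1) c i * c i.
set CC := \sum_(i < s) c i * c i.+1.
set Q1 := \sum_(v < N) Fv l (pg_e Gr)`_v v.
set E1 := \sum_(uv <- pg_edges Gr) _.
set D := Fv l x v0 - _.
move=> HV HB HW1 HW2.
have HQE : QG Gr l = Q1 + E1 by [].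
case: (boolP [exists v : 'I_N, l v != 0]) => [/existsP [v Hv]|Hno].
  have := Hr l (fun w Hw => Hl' w (ltn_addr _ Hw)) (ex_intro _ (nat_of_ord v) (conj (ltn_ord v) Hv)).
  rewrite HQE => HQ.
  have Hbn : l N * b = b * l N by rewrite mulrC.
  nia.
have H0 : forall v, (v < N)%N -> l v = 0.
  move=> v Hv; apply/eqP; apply: contraNT Hno => Hne; apply/existsP.
  by exists (Ordinal Hv).
have Hz := QG_zero Gr l Hed H0; rewrite HQE in Hz.
have Eb : b = 0 by rewrite /b H0.
have Hex : exists j, (j <= s)%N /\ c j != 0.
  case: Hnz' => v [Hv Hlv]; exists (v - N)%N.
  have HNv : (N <= v)%N by rewrite leqNgt; apply/negP => H; move: Hlv; rewrite H0 ?eqxx.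
  by rewrite /c subnKC // leq_subLR -ltnS -addnS.
have := HW2 Eb Hex.
move: HB; rewrite Eb => HB.
nia.
Qed.
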